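(* Let $G$ be a $W(K_3)$-free finite simple graph and let $x_1,x_2,x_3$ be three vertices of $G$ which are pairwise adjacent (form a triangle). Then $$\alpha_2\Big(G\setminus \bigcup_{i=1}^3 N_G(x_i)\Big)\geq \alpha_2(G)-2.$$
   Context: For a vertex $x$, $N_G(x)$ is its set of neighbours and $N_G[x]=N_G(x)\cup\{x\}$. For $U\subseteq V(G)$, $G\setminus U$ is the graph with vertex set $V(G)\setminus U$ and edge set $\{e\in E(G): e\cap U=\emptyset\}$. The star with center $x$ is the subgraph with vertex set $N_G[x]$ and edges $\{xy:y\in N_G(x)\}$. A star packing of $G$ is a family of stars of $G$ whose vertex sets are pairwise disjoint; $\alpha_2(G)$, the star packing number, is the maximum size of a star packing of $G$. A whiskered triangle $W(K_3)$ is the graph obtained from a triangle by attaching a pendant edge (to a new vertex of degree one) at each of its three vertices; $G$ is $W(K_3)$-free if it has no induced subgraph isomorphic to $W(K_3)$. *)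

(* Defs.v *)
(* Induced subgraphs
   (such as G \ U) are represented by their vertex set V : {set T}; the edges
   are those of e between vertices of V. *)
From mathcomp Require Import all_boot.
Set Implicit Arguments. Unset Strict Implicit. Unset Printing Implicit Defensive.

Section Graphs.
Variables (T : finType) (e : rel T).

Definition simple_graph : Prop := symmetric e /\ irreflexive e.

Definition nbhd (V : {set T}) (x : T) : {set T} := [set y in V | e x y].
Definition cnbhd (V : {set T}) (x : T) : {set T} := x |: nbhd V x.

(* A star packing of H = G[V], given by its set of centres S: the stars
   centred at distinct elements of S have pairwise disjoint vertex sets. *)
Definition star_packing (V S : {set T}) : bool :=
  (S \subset V) &&
  [forall x in S, forall y in S, (x != y) ==> [disjoint cnbhd V x & cnbhd V y]].

Definition alpha2 (V : {set T}) : nat :=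
  \max_(S : {set T} | star_packing V S) #|S|.

Definition gdel (U : {set T}) : {set T} := ~: U.

(* G contains no induced whiskered triangle: no six distinct vertices
   a1 a2 a3 b1 b2 b3 whose induced edges are exactly a_i a_j and a_i b_i. *)
Definition WK3_free : Prop :=
  ~ exists a1 a2 a3 b1 b2 b3 : T,
      uniq [:: a1; a2; a3; b1; b2; b3] /\
      [/\ e a1 a2, e a1 a3 & e a2 a3] /\
      [/\ e a1 b1, e a2 b2 & e a3 b3] /\
      [/\ ~~ e a1 b2, ~~ e a1 b3 & ~~ e a2 b1] /\
      [/\ ~~ e a2 b3, ~~ e a3 b1 & ~~ e a3 b2] /\
      [/\ ~~ e b1 b2, ~~ e b1 b3 & ~~ e b2 b3].
End Graphs.

(* Main.v *)
Require Import Defs.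
From mathcomp Require Import all_boot.
From mathcomp Require Import zify.

Lemma share (T : finType) (e : rel T) (S : {set T}) s t y :
  star_packing e setT S -> s \in S -> t \in S ->
  y \in cnbhd e setT s -> y \in cnbhd e setT t -> s = t.
Proof.
move=> /andP[_ /forallP H] hs ht ys yt.
apply/eqP; apply/negPn/negP => neq.
have := H s; rewrite hs /= => /forallP /(_ t); rewrite ht neq /= => D.
by rewrite (disjointFr D ys) in yt.
Qed.

Arguments share {T e S s t y}.

Lemma cn_self (T : finType) (e : rel T) V s : s \in cnbhd e V s.
Proof. by rewrite /cnbhd setU11. Qed.

Lemma cn_adj (T : finType) (e : rel T) s y : e s y -> y \in cnbhd e setT s.
Proof. by move=> h; rewrite /cnbhd /nbhd !inE h orbT. Qed.

Arguments cn_adj {T e s y}.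

Lemma cn_sub (T : finType) (e : rel T) V s : cnbhd e V s \subset cnbhd e setT s.
Proof.
apply/subsetP => y; rewrite /cnbhd /nbhd !inE.
by case/orP=> [->|/andP[_ ->]]; rewrite ?orbT.
Qed.

Arguments cn_sub {T e V s}.
Arguments cn_self {T e V s}.

Lemma key (T : finType) (e : rel T) (x1 x2 x3 : T) (S : {set T}) t1 t2 t3 :
  simple_graph e -> WK3_free e ->
  e x1 x2 -> e x1 x3 -> e x2 x3 -> star_packing e setT S ->
  t1 \in S -> t2 \in S -> t3 \in S -> t1 != t2 -> t1 != t3 -> t2 != t3 ->
  e x1 t1 -> e x2 t2 -> e x3 t3 -> False.
Proof.
move=> [sym irr] wf h12 h13 h23 hS i1 i2 i3 n12 n13 n23 a1 a2 a3.
have c1 : x1 \in cnbhd e setT t1 by apply: cn_adj; rewrite sym.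
have c2 : x2 \in cnbhd e setT t2 by apply: cn_adj; rewrite sym.
have c3 : x3 \in cnbhd e setT t3 by apply: cn_adj; rewrite sym.
have d : forall s t y, s \in S -> t \in S -> s != t ->
    y \in cnbhd e setT s -> y \in cnbhd e setT t -> False.
  by move=> s t y hs ht n ys yt; rewrite (share hS hs ht ys yt) eqxx in n.
have ne : forall a b, e a b -> a != b.
  by move=> a b h; apply/eqP => E; rewrite E irr in h.
have nadj : forall s t y, s \in S -> t \in S -> s != t ->
    y \in cnbhd e setT s -> ~~ e t y.
  move=> s t y hs ht n ys; apply/negP => /cn_adj yt; exact: (d s t y hs ht n ys yt).
have neqv : forall s t y, s \in S -> t \in S -> s != t ->
    y \in cnbhd e setT s -> y != t.
  move=> s t y hs ht n ys; apply/eqP => E; rewrite E in ys; exact: (d s t t hs ht n ys cn_self).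
have n21 : t2 != t1 by rewrite eq_sym.
have n31 : t3 != t1 by rewrite eq_sym.
have n32 : t3 != t2 by rewrite eq_sym.
apply: wf; exists x1, x2, x3, t1, t2, t3.
split.
  rewrite /= !inE !negb_or.
  rewrite (ne _ _ h12) (ne _ _ h13) (ne _ _ h23) (ne _ _ a1) (ne _ _ a2) (ne _ _ a3).
  rewrite (neqv _ _ _ i1 i2 n12 c1) (neqv _ _ _ i1 i3 n13 c1).
  rewrite (neqv _ _ _ i2 i1 n21 c2) (neqv _ _ _ i2 i3 n23 c2).
  rewrite (neqv _ _ _ i3 i1 n31 c3) (neqv _ _ _ i3 i2 n32 c3).
  by rewrite n12 n13 n23.
split; first by [].
split; first by [].
have r : forall a b, ~~ e b a -> ~~ e a b by move=> a b; rewrite sym.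
split; first split.
- by apply: r; apply: (nadj t1 t2 x1).
- by apply: r; apply: (nadj t1 t3 x1).
- by apply: r; apply: (nadj t2 t1 x2).
split; first split.
- by apply: r; apply: (nadj t2 t3 x2).
- by apply: r; apply: (nadj t3 t1 x3).
- by apply: r; apply: (nadj t3 t2 x3).
split.
- by apply: (nadj t2 t1 t2) => //; apply: cn_self.
- by apply: (nadj t3 t1 t3) => //; apply: cn_self.
- by apply: (nadj t3 t2 t3) => //; apply: cn_self.
Qed.

Theorem lemma3p1 (T : finType) (e : rel T) (x1 x2 x3 : T) :
  simple_graph e -> WK3_free e ->
  e x1 x2 -> e x1 x3 -> e x2 x3 ->
  alpha2 e [set: T] <=
    alpha2 e (gdel (nbhd e [set: T] x1 :|: nbhd e [set: T] x2 :|: nbhd e [set: T] x3)) + 2.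
Proof.
move=> sg wf h12 h13 h23.
set V' := gdel _.
apply/bigmax_leqP => S hS.
have hS' : star_packing e V' (S :&: V').
  apply/andP; split; first exact: subsetIr.
  apply/forallP => s; apply/implyP => hs; apply/forallP => t; apply/implyP => ht.
  apply/implyP => n.
  move: hs ht; rewrite !inE => /andP[hs _] /andP[ht _].
  move: hS => /andP[_ /forallP H].
  have := H s; rewrite hs /= => /forallP /(_ t); rewrite ht n /= => D.
  exact: disjointW cn_sub cn_sub D.
have le1 : #|S :&: V'| <= alpha2 e V' := @leq_bigmax_cond _ (fun S => star_packing e V' S) (fun S : {set T} => #|S|) _ hS'.
rewrite -(cardsID V' S) leq_add //.
set A := S :\: V'.
have memA : forall s, s \in A -> s \in S /\ [|| e x1 s, e x2 s | e x3 s].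
  by move=> s; rewrite /A /V' /gdel /nbhd !inE negbK orbA => /andP[-> ->].
rewrite leqNgt; apply/negP => h3.
have /card_gt0P [s1 hs1] : 0 < #|A| by lia.
have hA1 := cardsD1 s1 A; rewrite hs1 in hA1.
have /card_gt0P [s2 hs2] : 0 < #|A :\ s1| by lia.
have hA2 := cardsD1 s2 (A :\ s1); rewrite hs2 in hA2.
have /card_gt0P [s3 hs3] : 0 < #|A :\ s1 :\ s2| by lia.
move: hs2 hs3; rewrite !in_setD1 => /andP[n21 hs2] /andP[n32 /andP[n31 hs3]].
have n12 : s1 != s2 by rewrite eq_sym.
have n13 : s1 != s3 by rewrite eq_sym.
have n23 : s2 != s3 by rewrite eq_sym.
have [i1 o1] := memA _ hs1.
have [i2 o2] := memA _ hs2.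
have [i3 o3] := memA _ hs3.
move: sg => [sym irr].
have d : forall s t y, s \in S -> t \in S -> s != t ->
    e y s -> e y t -> False.
  move=> s t y hs ht n ys yt.
  have ys' : y \in cnbhd e setT s by apply: cn_adj; rewrite sym.
  have yt' : y \in cnbhd e setT t by apply: cn_adj; rewrite sym.
  by rewrite (share hS hs ht ys' yt') eqxx in n.
have K := @key T e x1 x2 x3 S.
case/or3P: o1 => a1; case/or3P: o2 => a2; case/or3P: o3 => a3;
  first [ by apply: (K s1 s2 s3)
        | by apply: (K s1 s3 s2)
        | by apply: (K s2 s1 s3)
        | by apply: (K s2 s3 s1)
        | by apply: (K s3 s1 s2)
        | by apply: (K s3 s2 s1)
        | by apply: (d s1 s2 _ i1 i2 n12 a1 a2)
        | by apply: (d s1 s3 _ i1 i3 n13 a1 a3)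
        | by apply: (d s2 s3 _ i2 i3 n23 a2 a3) ].
Qed.
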